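(* Let $n$ and $d$ be positive integers and $N(n,d,0)=\{\mathbf{s}_d\in A(d): s_{(n-1)\bmod d}=s_{d-1}\}$. If $d$ is composite, then $$|N(n,d,0)|=\begin{cases}|A(d)|=\sum_{e\mid d}\mu(e)2^{d/e}, & d\mid n,\\ 2^{d-1}-2-\sum_{e\mid d,\,1<e<d}|N(n,e,0)|, & d\nmid n.\end{cases}$$ If $d$ is prime, then $|N(n,d,0)|=|A(d)|=2^d-2$ if $d\mid n$, and $|N(n,d,0)|=2^{d-1}-2$ if $d\nmid n$.
   Context: Sequences are binary (entries in $\mathbb{Z}_2$); $x\bmod d$ is the least nonnegative residue. A length-$m$ sequence is periodic if it is the concatenation of $m/e$ copies of a length-$e$ sequence for a proper divisor $e$ of $m$, aperiodic otherwise. $A(d)$ is the set of aperiodic binary sequences $\mathbf{s}_d=(s_0,\dots,s_{d-1})$ of length $d$. $\mu$ is the Möbius function: $\mu(1)=1$, $\mu(m)=(-1)^k$ if $m$ is a product of $k$ distinct primes, $\mu(m)=0$ if $m$ is divisible by the square of a prime. *)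

(* Defs.v *)
From mathcomp Require Import all_boot all_order all_algebra.
Set Implicit Arguments. Unset Strict Implicit. Unset Printing Implicit Defensive.
Import GRing.Theory Num.Theory.

(* Binary sequences of length m are m.-tuple bool; s_i = nth false s i. *)

Definition periodic (m : nat) (s : seq bool) : bool :=
  [exists e : 'I_m, (e %| m) &&
     [exists t : e.-tuple bool, s == flatten (nseq (m %/ e) (val t))]].

Definition A (m : nat) : {set m.-tuple bool} :=
  [set s : m.-tuple bool | ~~ periodic m s].

Definition N0 (n m : nat) : {set m.-tuple bool} :=
  [set s in A m | nth false s ((n - 1) %% m) == nth false s (m - 1)].

Definition mobius (m : nat) : int :=
  if m == 0 then 0%R
  else if all (fun p => logn p m == 1) (primes m)
       then ((-1) ^+ size (primes m))%R else 0%R.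

(* Main.v *)
Require Import Defs.
From mathcomp Require Import all_boot all_order all_algebra zify.
Import GRing.Theory Num.Theory.

Definition FF (s : seq bool) (i : nat) : bool := nth false s (i %% size s).
Definition per (f : nat -> bool) (e : nat) := forall i, f (i + e) = f i.
Definition perb (s : seq bool) (e : nat) : bool :=
  all (fun i => FF s (i + e) == FF s i) (iota 0 (size s)).

Lemma FF_mod s i : FF s (i %% size s) = FF s i.
Proof. by rewrite /FF modn_mod. Qed.

Lemma perbP s e : reflect (per (FF s) e) (perb s e).
Proof.
apply: (iffP allP) => [H i | H i _]; last by rewrite H.
case: (posnP (size s)) => [s0|sp].
  by rewrite /FF s0 !modn0; move: s0 => /size0nil ->; rewrite !nth_nil.
have := H (i %% size s); rewrite mem_iota add0n ltn_mod sp => /(_ isT) /eqP.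
by rewrite FF_mod /FF modnDml.
Qed.

Lemma per_mul f e k i : per f e -> f (i + k * e) = f i.
Proof.
move=> H; elim: k i => [|k IH] i; first by rewrite mul0n addn0.
by rewrite mulSn addnA IH H.
Qed.

Lemma per_mod f e i : per f e -> f i = f (i %% e).
Proof. by move=> H; rewrite {1}(divn_eq i e) addnC per_mul. Qed.

Lemma per_gcd f a b : 0 < a -> per f a -> per f b -> per f (gcdn a b).
Proof.
move=> a0 Ha Hb i; case: (egcdnP b a0) => km kn E _.
by rewrite -(per_mul _ _ kn _ Hb) -addnA (addnC (gcdn a b)) -E per_mul.
Qed.

Lemma FF_per s : per (FF s) (size s).
Proof. by move=> i; rewrite /FF modnDr. Qed.

Definition pp (s : seq bool) : nat :=
  (find (fun e => (e.+1 %| size s) && perb s e.+1) (iota 0 (size s))).+1.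

Lemma pp_spec s : 0 < size s ->
  [/\ 0 < pp s, pp s %| size s, per (FF s) (pp s) &
      forall e, 0 < e < pp s -> ~~ ((e %| size s) && perb s e)].
Proof.
move=> sp; rewrite /pp; set p := (fun e => (e.+1 %| size s) && perb s e.+1).
have hp : has p (iota 0 (size s)).
  apply/hasP; exists (size s).-1; first by rewrite mem_iota /=; lia.
  rewrite /p prednK // dvdnn /=; apply/perbP; exact: FF_per.
have fs : find p (iota 0 (size s)) < size s.
  by move: hp; rewrite has_find size_iota.
have := nth_find 0 hp; rewrite nth_iota // add0n /p => /andP[h1 /perbP h2].
split => // e /andP[e0 ep].
have ep' : e.-1 < find p (iota 0 (size s)) by rewrite /p; lia.
have := before_find 0 ep'.
rewrite nth_iota; last by move: fs; lia.
by rewrite add0n /p prednK // => ->.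
Qed.

Lemma pp_dvd s e : 0 < size s -> 0 < e -> per (FF s) e -> pp s %| e.
Proof.
move=> sp ep pe; have [p0 pd pper pmin] := pp_spec s sp.
set g := gcdn (pp s) e.
have gp : per (FF s) g by apply: per_gcd.
have g0 : 0 < g by rewrite gcdn_gt0 p0.
have gle : g <= pp s by apply: dvdn_leq => //; apply: dvdn_gcdl.
case: (ltnP g (pp s)) => [glt|gge].
  have := pmin g; rewrite g0 glt => /(_ isT); rewrite (dvdn_trans (dvdn_gcdl _ _) pd).
  by move/perbP: gp => ->.
have -> : pp s = g by apply/eqP; rewrite eqn_leq gge gle.
exact: dvdn_gcdr.
Qed.

Lemma pp_eq s s' : 0 < size s -> 0 < size s' -> FF s =1 FF s' -> pp s = pp s'.
Proof.
move=> h h' E; have [p0 _ pper _] := pp_spec s h; have [p0' _ pper' _] := pp_spec s' h'.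
apply/eqP; rewrite eqn_dvd; apply/andP; split; apply: pp_dvd => //.
  by move=> i; rewrite !E pper'.
by move=> i; rewrite -!E pper.
Qed.


Lemma mkt_proof k (f : nat -> bool) : size (mkseq f k) == k.
Proof. by rewrite size_mkseq. Qed.
Definition mkt k (f : nat -> bool) : k.-tuple bool := Tuple (mkt_proof k f).
Lemma nth_mkt k f i : i < k -> nth false (mkt k f) i = f i.
Proof. by move=> h; rewrite /= nth_mkseq. Qed.

Definition rep m e (t : e.-tuple bool) : m.-tuple bool :=
  mkt m (fun i => nth false t (i %% e)).
Definition tk e (s : seq bool) : e.-tuple bool := mkt e (nth false s).

Lemma FF_rep m e (t : e.-tuple bool) : 0 < m -> e %| m -> FF (rep m e t) =1 FF t.
Proof.
move=> m0 em i; rewrite /FF !size_tuple nth_mkt ?ltn_mod //.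
by rewrite (modn_dvdm _ em).
Qed.

Lemma FF_tk (s : seq bool) e : 0 < e -> e <= size s -> per (FF s) e ->
  FF (tk e s) =1 FF s.
Proof.
move=> e0 es pe i; rewrite [RHS](per_mod _ _ _ pe) /FF size_tuple nth_mkt ?ltn_mod //.
by rewrite (modn_small (m := i %% e)) // (leq_trans _ es) ?ltn_mod.
Qed.

Lemma size_flat k (t : seq bool) : size (flatten (nseq k t)) = k * size t.
Proof. by elim: k => //= k IH; rewrite size_cat IH mulSn. Qed.

Lemma nth_flat k (t : seq bool) j :
  nth false (flatten (nseq k t)) j =
  if j < k * size t then nth false t (j %% size t) else false.
Proof.
elim: k j => [|k IH] j /=; first by rewrite nth_nil.
rewrite nth_cat; case: ltnP => [jl|jg].
  by rewrite modn_small // (leq_trans jl) // mulSn leq_addr.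
rewrite IH mulSn; have -> : (j - size t < k * size t) = (j < size t + k * size t) by lia.
case: ifP => // _; congr nth; rewrite -{2}(subnK jg) modnDr //.
Qed.

Lemma periodicE m (s : m.-tuple bool) : 0 < m -> periodic m s = (pp s < m).
Proof.
move=> m0; have sz : size s = m by rewrite size_tuple.
have s0 : 0 < size s by rewrite sz.
have [p0 pd pper pmin] := pp_spec s s0; rewrite sz in pd.
apply/idP/idP.
  case/existsP => -[e elt] /= /andP[ed /existsP[t /eqP E]].
  have e0 : 0 < e.
    by rewrite lt0n; apply/eqP => e0; move: ed; rewrite e0 dvd0n; lia.
  have key : forall i, FF s i = nth false t (i %% e).
    move=> i; rewrite /FF sz E nth_flat size_tuple (divnK ed) ltn_mod m0.
    by rewrite (modn_dvdm _ ed).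
  have pe : per (FF s) e by move=> i; rewrite !key modnDr.
  exact: leq_ltn_trans (dvdn_leq e0 (pp_dvd s e s0 e0 pe)) elt.
move=> plt; apply/existsP; exists (Ordinal plt) => /=; rewrite pd /=.
apply/existsP; exists (tk (pp s) s); apply/eqP.
apply: (@eq_from_nth _ false); first by rewrite size_flat !size_tuple divnK.
move=> i; rewrite sz => im; rewrite nth_flat size_tuple divnK // im.
rewrite nth_mkt ?ltn_mod //.
have lt2 : i %% pp s < m by rewrite (leq_trans _ (ltnW plt)) ?ltn_mod.
have := per_mod _ _ i pper; rewrite /FF sz (modn_small im) (modn_small lt2) => ->.
by [].
Qed.

Lemma inA m (s : m.-tuple bool) : 0 < m -> (s \in A m) = (pp s == m).
Proof.
move=> m0; rewrite inE periodicE //.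
have s0 : 0 < size s by rewrite size_tuple.
have [_ pd _ _] := pp_spec s s0.
rewrite size_tuple in pd; have := dvdn_leq m0 pd; lia.
Qed.


Lemma rep_inj m e : 0 < m -> e %| m -> injective (@rep m e).
Proof.
move=> m0 em t1 t2 E; apply: val_inj; apply: (@eq_from_nth _ false).
  by rewrite !size_tuple.
move=> i; rewrite size_tuple => ie.
have im : i < m by rewrite (leq_trans ie) // dvdn_leq.
have := congr1 (fun s : m.-tuple bool => nth false s i) E.
by rewrite /= !nth_mkseq // modn_small.
Qed.

Lemma count_dec m (Q : pred (m.-tuple bool)) : 0 < m ->
  #|[set s | Q s]| =
  \sum_(e <- divisors m) #|[set t : e.-tuple bool | (t \in A e) && Q (rep m e t)]|.
Proof.
move=> m0; rewrite -sum1dep_card.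
transitivity (\sum_(s | Q s) \sum_(e <- divisors m | pp s == e) 1).
  apply: eq_bigr => s _; rewrite sum1_count.
  have s0 : 0 < size s by rewrite size_tuple.
  have [_ pd _ _] := pp_spec s s0; rewrite size_tuple in pd.
  have := count_uniq_mem (pp s) (divisors_uniq m).
  rewrite -dvdn_divisors // pd => E.
  rewrite -[LHS]/(nat_of_bool true) -E; apply: eq_count => e /=; exact: eq_sym.
rewrite (exchange_big_dep predT) //=.
rewrite big_seq [RHS]big_seq; apply: eq_bigr => e.
rewrite -dvdn_divisors // => em.
have e0 : 0 < e by case: e em => //; rewrite dvd0n; lia.
rewrite sum1dep_card -(card_imset _ (rep_inj m e m0 em)); apply: eq_card => s.
rewrite inE; apply/idP/imsetP.
  case/andP => Qs /eqP pe.
  have s0 : 0 < size s by rewrite size_tuple.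
  have [_ pd pper _] := pp_spec s s0; rewrite pe in pper.
  have es : e <= size s by rewrite size_tuple dvdn_leq.
  have E : rep m e (tk e s) = s.
    apply: val_inj; apply: (@eq_from_nth _ false); first by rewrite !size_tuple.
    move=> i; rewrite size_tuple => im; rewrite /= !nth_mkseq ?ltn_mod //.
    have := per_mod _ _ i pper; rewrite /FF size_tuple (modn_small im) => ->.
    by rewrite (modn_small (m := i %% e)) // (leq_trans _ (dvdn_leq m0 em)) ?ltn_mod.
  exists (tk e s) => //; rewrite inE E Qs andbT inA //.
  rewrite (pp_eq _ s) ?pe ?size_tuple //; exact: FF_tk.
case=> t; rewrite inE => /andP[tA Qt] ->; rewrite Qt /=.
rewrite inA // in tA; rewrite (pp_eq _ t) ?size_tuple //; exact: FF_rep.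
Qed.


Lemma modm1 m e : 0 < m -> e %| m -> (m - 1) %% e = e - 1.
Proof.
move=> m0 em; have e0 : 0 < e.
  by rewrite lt0n; apply/eqP => e0; move: em; rewrite e0 dvd0n; lia.
have := divnK em; set q := m %/ e; case: q => [|q] E; first by lia.
have -> : m - 1 = q * e + (e - 1) by move: E; rewrite mulSn; lia.
by rewrite modnMDl modn_small //; lia.
Qed.

Definition flip m (s : m.-tuple bool) : m.-tuple bool :=
  mkt m (fun i => if i == m - 1 then ~~ nth false s i else nth false s i).
Arguments flip {m}.

Lemma flipK m : 0 < m -> involutive (@flip m).
Proof.
move=> m0 s; apply: val_inj; apply: (@eq_from_nth _ false); first by rewrite !size_tuple.
move=> i; rewrite size_tuple => im; rewrite /= !nth_mkseq //.
by case: (i == m - 1) => /=; rewrite ?negbK.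
Qed.

Lemma half_count m r : 0 < m -> r < m -> r != m - 1 ->
  #|[set s : m.-tuple bool | nth false s r == nth false s (m - 1)]| = 2 ^ (m - 1).
Proof.
move=> m0 rm rne.
set S := [set s : m.-tuple bool | _].
have fl : forall s : m.-tuple bool, nth false (flip s) r = nth false s r /\
                    nth false (flip s) (m - 1) = ~~ nth false s (m - 1).
  move=> s; rewrite /= !nth_mkseq //; last by lia.
  by rewrite (negbTE rne) eqxx.
have E : flip @: S = ~: S.
  apply/setP => s; rewrite !inE; apply/imsetP/idP.
    by case=> t; rewrite inE => /eqP h ->; have [-> ->] := fl t; rewrite h; case: (nth _ t _).
  move=> h; exists (flip s); last by rewrite flipK.
  by rewrite inE; have [-> ->] := fl s; move: h; case: (nth _ s r); case: (nth _ s _).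
have c : #|S| + #|~: S| = 2 ^ m by rewrite cardsC card_tuple card_bool.
rewrite -E card_imset in c; last exact: (can_inj (flipK m m0)).
have : 2 ^ m = 2 * 2 ^ (m - 1) by rewrite -expnS; congr (_ ^ _); lia.
lia.
Qed.

Lemma rep_nth m e (t : e.-tuple bool) i : i < m -> nth false (rep m e t) i = nth false t (i %% e).
Proof. by move=> im; rewrite /= nth_mkseq. Qed.

Lemma N0_sum n m : 0 < m -> ~~ (m %| n) -> 0 < n ->
  2 ^ (m - 1) = \sum_(e <- divisors m) #|N0 n e|.
Proof.
move=> m0 nd n0.
have rm : (n - 1) %% m < m by rewrite ltn_mod.
have rne : (n - 1) %% m != m - 1.
  apply/eqP => h; move: nd; rewrite /dvdn.
  have -> : n = (n - 1) + 1 by lia.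
  by rewrite -modnDml h subnK // modnn.
rewrite -(half_count _ _ m0 rm rne) (count_dec _ _ m0) big_seq [RHS]big_seq.
apply: eq_bigr => e; rewrite -dvdn_divisors // => em.
apply: eq_card => t; rewrite !inE.
congr andb.
have m1 : m - 1 < m by lia.
rewrite !rep_nth //.
by rewrite (modn_dvdm _ em) (modm1 _ _ m0 em).
Qed.

Lemma A_sum m : 0 < m -> 2 ^ m = \sum_(e <- divisors m) #|A e|.
Proof.
move=> m0; rewrite -card_bool -card_tuple -cardsT.
rewrite (_ : [set: m.-tuple bool] = [set s | predT s]); last by apply/setP => s; rewrite !inE.
rewrite (count_dec _ _ m0); apply: eq_bigr => e _; apply: eq_card => t.
by rewrite !inE andbT.
Qed.

Section Mob.
Local Open Scope ring_scope.

Lemma sum_eq_mem (r1 r2 : seq nat) (P1 P2 : pred nat) (F : nat -> int) :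
  uniq r1 -> uniq r2 -> (forall x, (P1 x && (x \in r1)) = (P2 x && (x \in r2))) ->
  \sum_(x <- r1 | P1 x) F x = \sum_(x <- r2 | P2 x) F x.
Proof.
move=> u1 u2 H; rewrite -big_filter -[RHS]big_filter; apply: perm_big.
by apply: uniq_perm; rewrite ?filter_uniq // => x; rewrite !mem_filter H.
Qed.

Lemma mu_p (p e : nat) : prime p -> (0 < e)%N -> ~~ (p %| e)%N ->
  mobius (p * e) = - mobius e.
Proof.
move=> pp e0 npe; have p0 := prime_gt0 pp.
have pe0 : (0 < p * e)%N by rewrite muln_gt0 p0.
have npr : p \notin primes e by rewrite mem_primes (negbTE npe) !andbF.
have PE : perm_eq (primes (p * e)) (p :: primes e).
  apply: uniq_perm; rewrite /= ?primes_uniq ?npr //.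
  by move=> q; rewrite primesM // primes_prime // inE.
rewrite /mobius muln_eq0 !gtn_eqF //= (perm_size PE) /=.
rewrite (perm_all _ PE) /= lognM // logn_prime // eqxx.
have -> : logn p e = 0%N by apply/eqP; rewrite -leqn0 leqNgt logn_gt0.
rewrite eqxx /=.
rewrite (@eq_in_all _ _ (fun q => logn q e == 1%N)); last first.
  move=> q qe; rewrite lognM // logn_prime //.
  by have -> : (q == p) = false by apply/eqP => qp; move: qe; rewrite qp (negbTE npr).
by case: ifP => _; rewrite ?exprS ?mulN1r ?oppr0.
Qed.

Lemma mu_p0 (p e : nat) : prime p -> (0 < e)%N -> (p %| e)%N -> mobius (p * e) = 0.
Proof.
move=> pp e0 pe; have p0 := prime_gt0 pp.
have pe0 : (0 < p * e)%N by rewrite muln_gt0 p0.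
rewrite /mobius muln_eq0 !gtn_eqF //=.
case: ifP => // /allP /(_ p).
rewrite mem_primes pp pe0 dvdn_mulr // => /(_ isT).
rewrite lognM // logn_prime // eqxx => /eqP.
have : (0 < logn p e)%N by rewrite logn_gt0 mem_primes pp e0 pe.
by move=> h; rewrite add1n => -[]; move: h; case: (logn p e).
Qed.

Lemma mu_sum k : (0 < k)%N -> \sum_(e <- divisors k) mobius e = (k == 1%N)%:R.
Proof.
move=> k0; case: (ltngtP k 1) => [|k1|->]; [lia| |].
2: by rewrite /divisors /= big_cons big_nil /mobius /=.
have pp := pdiv_prime k1; set p := pdiv k in pp *.
have p0 := prime_gt0 pp.
set k' := (k %/ p)%N.
have kk : k = (p * k')%N by rewrite mulnC divnK // pdiv_dvd.
have k'0 : (0 < k')%N by move: k0; rewrite kk muln_gt0 => /andP[].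
rewrite (bigID (fun e => p %| e)%N) /=.
have -> : \sum_(e <- divisors k | true && (p %| e)%N) mobius e =
          \sum_(y <- map (muln p) (divisors k')) mobius y.
  apply: sum_eq_mem; rewrite ?divisors_uniq ?map_inj_in_uniq ?divisors_uniq //.
    by move=> x y _ _ /eqP; rewrite eqn_pmul2l // => /eqP.
  move=> x /=; apply/andP/mapP.
    case=> /dvdnP[y ->] xk; exists y => //; last by rewrite mulnC.
    by move: xk; rewrite mulnC -!dvdn_divisors // {1}kk dvdn_pmul2l.
  case=> y yk ->; rewrite dvdn_mulr //; split => //.
  by rewrite -dvdn_divisors // kk dvdn_pmul2l // dvdn_divisors.
rewrite big_map (bigID (fun y => p %| y)%N) /= big1; last first.
  move=> [|i] pi; first by rewrite muln0.
  exact: mu_p0.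
rewrite add0r.
have -> : \sum_(i <- divisors k' | ~~ (p %| i)%N) mobius (p * i) =
          - \sum_(i <- divisors k' | ~~ (p %| i)%N) mobius i.
  rewrite -sumrN big_seq_cond [RHS]big_seq_cond; apply: eq_bigr => i /andP[ik pi].
  apply: mu_p => //; move: ik; rewrite -dvdn_divisors //; case: i pi => // _.
  by rewrite dvd0n; lia.
rewrite addrC (sum_eq_mem _ (divisors k) _ (fun i => ~~ (p %| i)%N)) ?divisors_uniq ?subrr //.
move=> x; case px: (p %| x)%N => //=.
rewrite -!dvdn_divisors // kk Gauss_dvdr //.
by rewrite coprime_sym prime_coprime // px.
Qed.

Lemma div_pos e m : (0 < m)%N -> (e %| m)%N -> (0 < e)%N /\ (0 < m %/ e)%N.
Proof.
move=> m0 em; have e0 : (0 < e)%N.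
  by rewrite lt0n; apply/eqP => e0; move: em; rewrite e0 dvd0n; lia.
by split => //; rewrite divn_gt0 // dvdn_leq.
Qed.

Lemma mobius_inv (a g : nat -> int) m : (0 < m)%N ->
  (forall k, (0 < k)%N -> g k = \sum_(f <- divisors k) a f) ->
  a m = \sum_(e <- divisors m) mobius e * g (m %/ e)%N.
Proof.
move=> m0 H.
transitivity (\sum_(e <- divisors m) \sum_(f <- divisors m | (f %| m %/ e)%N) mobius e * a f); last first.
  rewrite big_seq [RHS]big_seq; apply: eq_bigr => e; rewrite -dvdn_divisors // => em.
  have [e0 me0] := div_pos _ _ m0 em.
  rewrite H // mulr_sumr; apply: sum_eq_mem; rewrite ?divisors_uniq // => f.
  rewrite -!dvdn_divisors //.
  case fd: (f %| m %/ e)%N => //=.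
  by apply: (dvdn_trans fd); apply: dvdn_div.
rewrite (exchange_big_dep predT) //=.
transitivity (\sum_(f <- divisors m) a f * ((m %/ f)%N == 1%N)%:R).
  rewrite (bigD1_seq m) ?divisors_id ?divisors_uniq //= divnn m0 eqxx mulr1.
  rewrite big_seq_cond big1 ?addr0 // => f /andP[fd fm].
  rewrite -dvdn_divisors // in fd.
  have -> : ((m %/ f)%N == 1%N) = false.
    apply/negP => /eqP h; move/negP: fm; apply; apply/eqP.
    by move: (divnK fd); rewrite h mul1n.
  by rewrite mulr0.
rewrite big_seq [RHS]big_seq; apply: eq_bigr => f; rewrite -dvdn_divisors // => fm.
have [f0 mf0] := div_pos _ _ m0 fm.
rewrite -mu_sum // mulrC mulr_suml; apply: sum_eq_mem; rewrite ?divisors_uniq // => e.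
rewrite -!dvdn_divisors //=.
case em: (e %| m)%N; first by rewrite andbT !dvdn_divRL // mulnC.
rewrite andbF; apply/negbTE; apply: contraFN em => h.
by apply: (dvdn_trans h); apply: dvdn_div.
Qed.

End Mob.

Lemma split_div d (F : nat -> nat) : 1 < d ->
  \sum_(e <- divisors d) F e = F 1 + F d + \sum_(e <- divisors d | 1 < e < d) F e.
Proof.
move=> d1; have d0 : 0 < d by lia.
rewrite (bigID (fun e => 1 < e < d)) /= addnC; congr (_ + _).
rewrite -big_filter (perm_big [:: 1; d]); first by rewrite big_cons big_seq1.
apply: uniq_perm; rewrite ?filter_uniq ?divisors_uniq //=; first by rewrite inE; lia.
move=> x; rewrite mem_filter !inE -dvdn_divisors //.
case xd: (x %| d).
  have := dvdn_leq d0 xd; have [x0 _] := div_pos _ _ d0 xd; lia.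
have h1 : x != 1 by apply: contraFneq xd => ->; exact: dvd1n.
have h2 : x != d by apply: contraFneq xd => ->; exact: dvdnn.
by rewrite andbF (negbTE h1) (negbTE h2).
Qed.

Lemma periodic1 (s : 1.-tuple bool) : periodic 1 s = false.
Proof. by apply/existsP => -[[[|e] //] ?]. Qed.

Lemma cardA1 : #|A 1| = 2.
Proof.
rewrite (_ : A 1 = setT) ?cardsT ?card_tuple ?card_bool //.
by apply/setP => s; rewrite !inE periodic1.
Qed.

Lemma cardN1 n : #|N0 n 1| = 2.
Proof.
rewrite (_ : N0 n 1 = setT) ?cardsT ?card_tuple ?card_bool //.
by apply/setP => s; rewrite !inE periodic1 modn1 subnn eqxx.
Qed.

Lemma N0_A n d : 0 < n -> d %| n -> N0 n d = A d.
Proof.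
move=> n0 dn; have [d0 _] := div_pos _ _ n0 dn.
by apply/setP => s; rewrite !inE modm1 // eqxx andbT.
Qed.

Lemma prime_mid d : prime d -> \sum_(e <- divisors d | 1 < e < d) (fun _ => 0) e = 0.
Proof. by rewrite big1. Qed.

Lemma prime_split d (F : nat -> nat) : prime d ->
  \sum_(e <- divisors d) F e = F 1 + F d.
Proof.
move=> pd; rewrite split_div ?prime_gt1 // big_seq_cond big_pred0 ?addn0 // => e.
apply/negbTE; apply/negP => /andP[]; rewrite -dvdn_divisors ?prime_gt0 //.
by case/primeP: pd => _ H /H /orP[] /eqP ->; lia.
Qed.

Lemma Posz_exp k : Posz (2 ^ k) = (2 ^+ k)%R.
Proof. by elim: k => // k IH; rewrite expnS PoszM IH exprS. Qed.

Lemma Posz_sum (r : seq nat) (P : pred nat) (F : nat -> nat) :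
  Posz (\sum_(i <- r | P i) F i) = (\sum_(i <- r | P i) Posz (F i))%R.
Proof. exact: (big_morph Posz PoszD (erefl _)). Qed.

Local Open Scope ring_scope.

Theorem lemma10 (n d : nat) (hn : (0 < n)%N) (hd : (0 < d)%N) :
  (((1 < d)%N && ~~ prime d) ->
     (((d %| n)%N ->
        #|N0 n d| = #|A d| /\
        (#|A d|%:Z = \sum_(e <- divisors d) mobius e * 2 ^+ (d %/ e))) /\
      (~~ (d %| n)%N ->
        #|N0 n d|%:Z = 2 ^+ (d - 1) - 2
                       - \sum_(e <- divisors d | (1 < e < d)%N) #|N0 n e|%:Z))) /\
  (prime d ->
     (((d %| n)%N -> #|N0 n d| = #|A d| /\ #|A d|%:Z = 2 ^+ d - 2) /\
      (~~ (d %| n)%N -> #|N0 n d|%:Z = 2 ^+ (d - 1) - 2))).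
Proof.
split.
  case/andP => d1 _; split.
    move=> dn; rewrite N0_A //; split => //.
    apply: (mobius_inv (fun f => #|A f|%:Z) (fun k => 2 ^+ k)) => // k k0.
    by rewrite -Posz_exp (A_sum _ k0) Posz_sum.
  move=> nd; have := N0_sum n d hd nd hn; rewrite split_div // cardN1 => E.
  rewrite -Posz_sum -Posz_exp E !PoszD; lia.
move=> pd; split.
  move=> dn; rewrite N0_A //; split => //.
  have := A_sum _ hd; rewrite prime_split // cardA1 => E.
  rewrite -Posz_exp E PoszD; lia.
move=> nd; have := N0_sum n d hd nd hn; rewrite prime_split // cardN1 => E.
rewrite -Posz_exp E PoszD; lia.
Qed.
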